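(* Let $\mathcal{A}$ be a strongly connected $d$-dimensional VASS MDP and $(\mathbf{y},\mathbf{z})$ a maximal solution of constraint system (II). There is a constant $k$ depending only on $\mathcal{A}$ (and $\mathbf{y},\mathbf{z}$) such that for every counter $c$ with $\mathbf{y}(c)>0$, every $\varepsilon>0$, every $p\in Q$ and every strategy $\sigma$, there exists $n_0$ such that for all $n\ge n_0$: $\mathbb{P}^\sigma_{p\mathbf{n}}\big(\mathcal{C}[c]\ge n^{1+\varepsilon}\big)\le k\,n^{-\varepsilon}$.
   Context: Let $d\ge 1$. A $d$-dimensional VASS MDP is a tuple $\mathcal{A}=(Q,(Q_n,Q_p),T,P)$, where $Q$ is a finite nonempty set of states partitioned into nondeterministic states $Q_n$ and probabilistic states $Q_p$; $T\subseteq Q\times\mathbb{Z}^d\times Q$ is a finite set of transitions such that for every $p\in Q$ the set $\mathit{Out}(p)$ of transitions of the form $(p,\mathbf{u},q)$ is nonempty; and $P$ assigns to every $t\in\mathit{Out}(p)$ with $p\in Q_p$ a positive rational probability such that $\sum_{t\in\mathit{Out}(p)}P(t)=1$. For $t=(p,\mathbf{u},q)$ write $\mathbf{u}_t=\mathbf{u}$. $\mathcal{A}$ is strongly connected if its underlying graph is strongly connected. A strategy $\sigma$ maps every finite path ending in a state $p\in Q_n$ to a probability distribution over $\mathit{Out}(p)$. A configuration $p\mathbf{v}$ ($p\in Q$, $\mathbf{v}\in\mathbb{Z}^d$) is terminal if some component of $\mathbf{v}$ is negative. A computation from $p\mathbf{v}$ along an infinite path $p_0,\mathbf{u}_1,p_1,\dots$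 is $p_0\mathbf{v}_0,p_1\mathbf{v}_1,\dots$ with $\mathbf{v}_0=\mathbf{v}$, $\mathbf{v}_{i+1}=\mathbf{v}_i+\mathbf{u}_{i+1}$; $\mathit{Term}(\pi)$ is the least $j$ with $p_j\mathbf{v}_j$ terminal ($\infty$ if none). $\mathbb{P}^\sigma_{p\mathbf{v}}$ is the probability measure on computations from $p\mathbf{v}$ under $\sigma$. $\mathbf{n}$ is the vector with all components $n$. $\mathcal{C}[c](\pi)=\sup\{\mathbf{v}_i(c):0\le i<\mathit{Term}(\pi)\}$. Constraint system (II): find $\mathbf{y}\in\mathbb{Z}^d$, $\mathbf{z}\in\mathbb{Z}^Q$ with $\mathbf{y}\ge\vec 0$, $\mathbf{z}\ge\vec 0$, $\mathbf{z}(q)-\mathbf{z}(p)+\sum_{i=1}^d\mathbf{u}(i)\mathbf{y}(i)\le 0$ for every $(p,\mathbf{u},q)\in T$ with $p\in Q_n$, and $\sum_{t=(p,\mathbf{u},q)\in\mathit{Out}(p)}P(t)\big(\mathbf{z}(q)-\mathbf{z}(p)+\sum_{i=1}^d\mathbf{u}_t(i)\mathbf{y}(i)\big)\le 0$ for every $p\in Q_p$. Its objective inequalities are $\mathbf{y}(c)>0$ for each counter $c$, the strict versions of the inequality for each $(p,\mathbf{u},q)\in T$ with $p\in Q_n$, and the strict version of the probabilistic inequality for each $p\in Q_p$. A solution is maximal if every objective inequality satisfied strictly by some solution is satisfied strictly by it. *)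

(* Defs.v *)
From HB Require Import structures.
From mathcomp Require Import all_boot all_order all_algebra.
From mathcomp Require Import all_classical all_reals.
From mathcomp Require Import exp.
Set Implicit Arguments. Unset Strict Implicit. Unset Printing Implicit Defensive.
Import Order.TTheory GRing.Theory Num.Theory.
Local Open Scope ring_scope.

Definition vec (d : nat) := {ffun 'I_d -> int}.

(* A d-dimensional VASS MDP.  [trans] lists the finite set T of transitions
   (p, u, q); [nondet p] says p is in Q_n (otherwise p is in Q_p);
   [prob] is the probability assignment P (only relevant on transitions
   leaving probabilistic states). *)
Record VASSMDP (d : nat) := {
  st : finType;
  nondet : pred st;
  trans : seq (st * vec d * st);
  prob : st * vec d * st -> rat
}.
Arguments st {d} v.
Arguments nondet {d} v.
Arguments trans {d} v.
Arguments prob {d} v.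

Section Defs.
Variables (d : nat) (A : VASSMDP d).
Local Notation Q := (st A).
Local Notation Tr := (Q * vec d * Q)%type.

Definition src (t : Tr) : Q := t.1.1.
Definition upd (t : Tr) : vec d := t.1.2.
Definition tgt (t : Tr) : Q := t.2.

Definition Out (p : Q) : seq Tr := [seq t <- trans A | src t == p].

Definition wf_VASSMDP : Prop :=
  [/\ uniq (trans A),
      (forall p : Q, Out p != [::]) &
      (forall p : Q, ~~ nondet A p ->
         (forall t, t \in Out p -> 0 < prob A t) /\
         \sum_(t <- Out p) prob A t = 1)].

Definition edge : rel Q := fun p q => has (fun t => (src t == p) && (tgt t == q)) (trans A).
Definition strongly_connected : Prop := forall p q : Q, connect edge p q.

(* Finite paths: a start state and the sequence of transitions taken. *)
Definition last_state (p0 : Q) (ts : seq Tr) : Q := last p0 (map tgt ts).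

(* A (randomized, history-dependent) strategy: for each finite path
   (start state p0, transitions ts) ending in a state of Q_n, a probability
   distribution over Out(last state). *)
End Defs.
Arguments Out {d} A p.
Arguments last_state {d A} p0 ts.

Section Defs2.
Variables (R : realType) (d : nat) (A : VASSMDP d).
Local Notation Q := (st A).
Local Notation Tr := (Q * vec d * Q)%type.

Definition is_strategy (sigma : Q -> seq Tr -> Tr -> R) : Prop :=
  forall (p0 : Q) (ts : seq Tr), nondet A (last_state p0 ts) ->
    (forall t, 0 <= sigma p0 ts t) /\
    (forall t, t \notin Out A (last_state p0 ts) -> sigma p0 ts t = 0) /\
    \sum_(t <- Out A (last_state p0 ts)) sigma p0 ts t = 1.

Definition step_prob (sigma : Q -> seq Tr -> Tr -> R) (p0 : Q) (ts : seq Tr) (t : Tr) : R :=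
  let q := last_state p0 ts in
  if t \in Out A q then
    (if nondet A q then sigma p0 ts t else ratr (prob A t))
  else 0.

(* Probability of the cylinder of infinite paths with prefix (p0, ts). *)
Fixpoint path_prob_rec (sigma : Q -> seq Tr -> Tr -> R) (p0 : Q) (hist : seq Tr)
    (ts : seq Tr) : R :=
  match ts with
  | [::] => 1
  | t :: ts' => step_prob sigma p0 hist t * path_prob_rec sigma p0 (rcons hist t) ts'
  end.
Definition path_prob sigma p0 ts := path_prob_rec sigma p0 [::] ts.

Fixpoint seqs_of_len {T : Type} (m : nat) (s : seq T) : seq (seq T) :=
  match m with
  | 0 => [:: [::]]
  | m'.+1 => [seq t :: r | t <- s, r <- seqs_of_len m' s]
  end.

Definition vec_after (v : vec d) (ts : seq Tr) (i : nat) : 'I_d -> int :=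
  fun c => v c + \sum_(t <- take i ts) upd t c.

Definition nonterminal (w : 'I_d -> int) : bool := [forall c, 0 <= w c].

(* For a computation whose first m transitions are ts: "some index i <= m
   with i < Term(pi) has v_i(c) >= x".  The event  C[c](pi) >= x  (x real)
   is the increasing union over m of these prefix events, since C[c] is a
   supremum of integers. *)
Definition reach_within (v : vec d) (c : 'I_d) (x : R) (m : nat) (ts : seq Tr) : bool :=
  [exists i : 'I_m.+1,
     [forall j : 'I_m.+1, (j <= i)%N ==> nonterminal (vec_after v ts j)] &&
     (x <= ((vec_after v ts i c)%:~R : R))].

Definition prob_reach_within (sigma : Q -> seq Tr -> Tr -> R) (p : Q) (v : vec d)
    (c : 'I_d) (x : R) (m : nat) : R :=
  \sum_(ts <- seqs_of_len m (trans A))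
     (if reach_within v c x m ts then path_prob sigma p ts else 0).

(* P^sigma_{p v}( C[c] >= x ) <= b, written via continuity of measure from
   below: the event is the increasing union over m of the prefix events. *)
Definition prob_C_ge_le (sigma : Q -> seq Tr -> Tr -> R) (p : Q) (v : vec d)
    (c : 'I_d) (x : R) (b : R) : Prop :=
  forall m : nat, prob_reach_within sigma p v c x m <= b.
End Defs2.
Arguments is_strategy {R d} A sigma.
Arguments prob_C_ge_le {R d} A sigma p v c x b.

Section System.
Variables (d : nat) (A : VASSMDP d).
Local Notation Q := (st A).
Local Notation Tr := (Q * vec d * Q)%type.

Definition lhs (y : 'I_d -> int) (z : Q -> int) (t : Tr) : int :=
  z (tgt t) - z (src t) + \sum_(i < d) upd t i * y i.

Definition prob_lhs (y : 'I_d -> int) (z : Q -> int) (p : Q) : rat :=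
  \sum_(t <- Out A p) prob A t * (lhs y z t)%:~R.

Definition solution_II (y : 'I_d -> int) (z : Q -> int) : Prop :=
  [/\ (forall i, 0 <= y i), (forall q, 0 <= z q),
      (forall t, t \in trans A -> nondet A (src t) -> lhs y z t <= 0) &
      (forall p, ~~ nondet A p -> prob_lhs y z p <= 0)].

Definition maximal_solution_II (y : 'I_d -> int) (z : Q -> int) : Prop :=
  solution_II y z /\
  forall (y' : 'I_d -> int) (z' : Q -> int), solution_II y' z' ->
    [/\ (forall c, 0 < y' c -> 0 < y c),
        (forall t, t \in trans A -> nondet A (src t) -> lhs y' z' t < 0 -> lhs y z t < 0) &
        (forall p, ~~ nondet A p -> prob_lhs y' z' p < 0 -> prob_lhs y z p < 0)].
End System.

Definition nvec (d : nat) (n : nat) : vec d := [ffun _ => n%:Z].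
Arguments wf_VASSMDP {d} A.
Arguments strongly_connected {d} A.
Arguments solution_II {d} A y z.
Arguments maximal_solution_II {d} A y z.

(* Main.v *)
Require Import Defs.
From HB Require Import structures.
From mathcomp Require Import all_boot all_order all_algebra.
From mathcomp Require Import all_classical all_reals.
From mathcomp Require Import exp.
From mathcomp Require Import zify ring lra.
Import Order.TTheory GRing.Theory Num.Theory.
Local Open Scope ring_scope.

Section Proof.
Variables (R : realType) (d : nat) (A : VASSMDP d) (y : 'I_d -> int) (z : st A -> int).
Local Notation Tr := (st A * vec d * st A)%type.
Variable sigma : st A -> seq Tr -> Tr -> R.
Variable p0 : st A.
Hypothesis wfA : wf_VASSMDP A.
Hypothesis strat : is_strategy A sigma.
Hypothesis solII : solution_II A y z.

Local Notation sp := (step_prob sigma p0).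
Local Notation ppr := (path_prob_rec sigma p0).

Lemma conv_out q (F : Tr -> R) :
  \sum_(t <- trans A) (if t \in Out A q then F t else 0) = \sum_(t <- Out A q) F t.
Proof.
rewrite -big_mkcond /Out big_filter [RHS]big_seq_cond [LHS]big_seq_cond.
apply: eq_bigl => t; rewrite mem_filter; case: (t \in trans A); rewrite ?andbT ?andbF //.
Qed.

Lemma sp_ge0 hist t : 0 <= sp hist t.
Proof.
rewrite /step_prob; case: ifP => // tin; case: ifP => nd.
  by case: (strat p0 hist nd) => H _; apply: H.
case: wfA => _ _ H; case: (H _ (negbT nd)) => Hp _.
by rewrite ler0q; apply/ltW/Hp.
Qed.

Lemma sp_sum hist : \sum_(t <- trans A) sp hist t = 1.
Proof.
rewrite /step_prob conv_out; case nd: (nondet A (last_state p0 hist)).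
  by case: (strat p0 hist nd) => _ [].
case: wfA => _ _ H; case: (H _ (negbT nd)) => _ Hs.
by rewrite -(rmorph_sum (@ratr R)) Hs rmorph1.
Qed.

Lemma ppr_ge0 ts hist : 0 <= ppr hist ts.
Proof.
elim: ts hist => [|t ts IH] hist /=; first exact: ler01.
by apply: mulr_ge0; [exact: sp_ge0 | exact: IH].
Qed.

Lemma mass m hist : \sum_(ts <- seqs_of_len m (trans A)) ppr hist ts = 1.
Proof.
elim: m hist => [|m IH] hist /=; first by rewrite big_seq1.
rewrite big_allpairs_dep /=.
under eq_bigr => t _ do rewrite -big_distrr /= IH mulr1.
exact: sp_sum.
Qed.

Lemma supermart hist :
  \sum_(t <- trans A) sp hist t * (lhs y z t)%:~R <= 0.
Proof.
rewrite /step_prob.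
under eq_bigr => t _ do rewrite (fun_if (fun a => a * (lhs y z t)%:~R)) mul0r.
rewrite conv_out; case nd: (nondet A (last_state p0 hist)).
  rewrite big_seq; apply: sumr_le0 => t; rewrite /Out mem_filter => /andP [/eqP st tin].
  apply: mulr_ge0_le0.
    by case: (strat p0 hist nd) => H _; apply: H.
  case: solII => _ _ H _; rewrite lerz0; apply: H => //; by rewrite st.
rewrite (eq_bigr (fun t => ratr (prob A t * (lhs y z t)%:~R))); last first.
  by move=> t _; rewrite rmorphM /= ratr_int.
by rewrite -(rmorph_sum (@ratr R)) lerq0; case: solII => _ _ _ H; apply: H; rewrite nd.
Qed.

Variables (c : 'I_d) (x : R).

Definition Rw (w : 'I_d -> int) (ts : seq Tr) (m : nat) : bool :=
  [exists i : 'I_m.+1,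
     [forall j : 'I_m.+1, (j <= i)%N ==>
        nonterminal (fun c0 => w c0 + \sum_(t <- take j ts) upd t c0)] &&
     (x <= ((w c + \sum_(t <- take i ts) upd t c)%:~R : R))].

Lemma eq_nonterminal (f g : 'I_d -> int) : (forall i, f i = g i) ->
  nonterminal f = nonterminal g.
Proof. by move=> H; apply: eq_forallb => i; rewrite H. Qed.

Lemma nonterminal0 (w : 'I_d -> int) (ts : seq Tr) :
  nonterminal (fun c0 => w c0 + \sum_(t <- take 0 ts) upd t c0) = nonterminal w.
Proof. by apply: eq_nonterminal => i; rewrite take0 big_nil addr0. Qed.

Lemma Rw0 w (ts : seq Tr) : Rw w ts 0 = nonterminal w && (x <= (w c)%:~R).
Proof.
apply/idP/idP.
  case/existsP => i /andP [/forallP H1 H2].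
  have i0 : i = ord0 by apply: val_inj; case: i {H1 H2} => [[]].
  move: (H1 ord0) H2; rewrite i0 /= take0 big_nil addr0 => H3 ->; rewrite andbT. move: H3. by rewrite (@eq_nonterminal _ w) // => i1; rewrite big_nil addr0.
case/andP => H1 H2; apply/existsP; exists ord0; apply/andP; split.
  apply/forallP => j; apply/implyP => _.
  have -> : j = ord0 by apply: val_inj; case: j => [[]].
  by rewrite nonterminal0.
by rewrite /= ?take0 ?big_nil ?addr0.
Qed.
Lemma RwS w t (ts : seq Tr) m : Rw w (t :: ts) m.+1 =
  nonterminal w && ((x <= (w c)%:~R) || Rw (fun c0 => w c0 + upd t c0) ts m).
Proof.
have shift : forall j : nat, forall c0,
    w c0 + \sum_(t0 <- take j.+1 (t :: ts)) upd t0 c0 =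
    (w c0 + upd t c0) + \sum_(t0 <- take j ts) upd t0 c0.
  by move=> j c0; rewrite /= big_cons addrA.
rewrite {1}/Rw; apply/idP/idP.
  case/existsP => i /andP [/forallP H1 H2].
  have Hw : nonterminal w.
    by move: (H1 ord0); rewrite /= (@eq_nonterminal _ w) // => i1; rewrite ?take0 ?big_nil ?addr0.
  rewrite Hw /=.
  case: i H1 H2 => [[|i] Hi] H1 H2.
    by rewrite /= ?take0 ?big_nil ?addr0 in H2; rewrite H2.
  apply/orP; right; apply/existsP.
  have Hi' : (i < m.+1)%N by [].
  exists (Ordinal Hi'); apply/andP; split; last by rewrite /= -shift.
  apply/forallP => -[j Hj]; apply/implyP => /= Hji.
  have Hj' : (j.+1 < m.+2)%N by [].
  move: (H1 (Ordinal Hj')) => /implyP /= /(_ Hji). by rewrite (@eq_nonterminal _ (fun c0 => w c0 + upd t c0 + \sum_(t0 <- take j ts) upd t0 c0)) // => c0; rewrite big_cons addrA.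
case/andP => Hw /orP [H2 | ]; last (rewrite /Rw; case/existsP => -[i Hi] /andP [/forallP H1 H2]).
  apply/existsP; exists ord0; apply/andP; split.
    apply/forallP => -[[|j] Hj]; apply/implyP => //= _.
    by rewrite (@eq_nonterminal _ w) // => i1; rewrite ?take0 ?big_nil ?addr0.
  by rewrite /= ?take0 ?big_nil ?addr0.
have Hi' : (i.+1 < m.+2)%N by [].
apply/existsP; exists (Ordinal Hi'); apply/andP; split; last by rewrite /= shift.
apply/forallP => -[[|j] Hj]; apply/implyP => /= Hji.
  by rewrite (@eq_nonterminal _ w) // => i1; rewrite ?take0 ?big_nil ?addr0.
have Hj' : (j < m.+1)%N by [].
move: (H1 (Ordinal Hj')) => /implyP /= /(_ Hji) H.
suff -> : nonterminal (fun c1 => w c1 + \sum_(t0 <- t :: take j ts) upd t0 c1) = nonterminal (fun c0 => w c0 + upd t c0 + \sum_(t0 <- take j ts) upd t0 c0) by [].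
by apply: eq_nonterminal => c0; rewrite big_cons addrA.
Qed.

Definition K : nat := \max_(t <- trans A) \max_(i < d) `|upd t i|%N.
Definition C : int := \sum_(i < d) (K%:Z) * y i.
Definition Wv (w : 'I_d -> int) (q : st A) : int := \sum_(i < d) w i * y i + z q.
Definition f m hist (w : 'I_d -> int) : R :=
  \sum_(ts <- seqs_of_len m (trans A)) (if Rw w ts m then ppr hist ts else 0).

Lemma upd_lb t i : t \in trans A -> -(K%:Z) <= upd t i.
Proof.
move=> tin.
have H2 := @leq_bigmax_seq _ (trans A) xpredT (fun t => \max_(i < d) `|upd t i|%N) t tin isT.
have H3 := @leq_bigmax _ (fun i => `|upd t i|%N) i.
have H1 : (`|upd t i| <= K)%N by exact: leq_trans H3 H2.
move: H1; case: (upd t i) => n /=; lia.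
Qed.

Lemma W_lb w q : (forall i, -(K%:Z) <= w i) -> 0 <= Wv w q + C.
Proof.
move=> H; rewrite /Wv /C -addrA (addrC (z q)) addrA -big_split /=.
apply: addr_ge0; last by case: solII => _ Hz _ _; apply: Hz.
apply: sumr_ge0 => i _; rewrite -mulrDl; apply: mulr_ge0; last by case: solII => Hy _ _ _; apply: Hy.
by rewrite -lerBlDr sub0r.
Qed.

Lemma W_ge_c w q : nonterminal w -> 1 <= y c -> w c <= Wv w q.
Proof.
move=> /forallP Hw Hy1; rewrite /Wv (bigD1 c) //=.
have H1 : 0 <= \sum_(i < d | i != c) w i * y i.
  by apply: sumr_ge0 => i _; apply: mulr_ge0 => //; case: solII => Hy _ _ _; apply: Hy.
have H2 : 0 <= z q by case: solII => _ Hz _ _; apply: Hz.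
have H3 := Hw c.
have H4 : w c * 1 <= w c * y c := ler_wpM2l H3 Hy1.
by rewrite mulr1 in H4; apply: le_trans H4 _; rewrite -addrA lerDl addr_ge0.
Qed.

Lemma W_step w t : Wv (fun i => w i + upd t i) (tgt t) = Wv w (src t) + lhs y z t.
Proof.
rewrite /Wv /lhs.
under eq_bigr do rewrite mulrDl.
rewrite big_split /=; ring.
Qed.

Lemma last_rcons_st hist t : last_state p0 (rcons hist t) = tgt t.
Proof. by rewrite /last_state map_rcons last_rcons. Qed.

Hypothesis hy : 1 <= y c.
Hypothesis Hxc : 0 < x + (C%:~R : R).

Lemma main m : forall hist w, (forall i, -(K%:Z) <= w i) ->
   f m hist w * (x + C%:~R) <= ((Wv w (last_state p0 hist) + C)%:~R : R).
Proof.
elim: m => [|m IH] hist w Hlow.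
  rewrite /f /= big_seq1 Rw0.
  case: ifP => [/andP [Hn Hx] | _]; last by rewrite mul0r ler0z W_lb.
  rewrite mul1r intrD lerD2r; apply: le_trans Hx _; rewrite ler_int; exact: W_ge_c.
rewrite /f /= big_allpairs_dep /=.
case Hn : (nonterminal w).
  case Hx : (x <= (w c)%:~R).
    under eq_bigr => t _ do under eq_bigr => r _ do rewrite RwS Hn Hx /=.
    under eq_bigr => t _ do rewrite -big_distrr /= mass mulr1.
    rewrite sp_sum mul1r intrD lerD2r; apply: le_trans Hx _; rewrite ler_int; exact: W_ge_c.
  under eq_bigr => t _ do under eq_bigr => r _ do
    rewrite RwS Hn Hx /= -[X in if _ then X else _]/(sp hist t * ppr (rcons hist t) r)
       -(mulr0 (sp hist t)) -fun_if.
  under eq_bigr => t _ do rewrite -big_distrr /=.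
  rewrite big_distrl /=.
  apply: (@le_trans _ _ (\sum_(t <- trans A) sp hist t *
        ((Wv (fun i => w i + upd t i) (tgt t) + C)%:~R))).
    rewrite big_seq [X in _ <= X]big_seq; apply: ler_sum => t tin.
    rewrite -mulrA; apply: ler_wpM2l; first exact: sp_ge0.
    rewrite -(last_rcons_st hist t); apply: IH => i.
    have H5 := @upd_lb t i tin; move/forallP: Hn => /(_ i) H6. by rewrite -[X in X <= _]add0r; apply: lerD.
  rewrite (eq_bigr (fun t => sp hist t * (Wv w (last_state p0 hist) + C)%:~R
                           + sp hist t * (lhs y z t)%:~R)); last first.
    move=> t _; rewrite -mulrDr; rewrite /step_prob; case: ifP => tin; last by rewrite !mul0r.
    move: tin; rewrite /Out mem_filter => /andP [/eqP <- _].
    by rewrite W_step -!intrD addrAC.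
  rewrite big_split /= -big_distrl /= sp_sum mul1r.
  have := supermart hist; lra.
under eq_bigr => t _ do under eq_bigr => r _ do rewrite RwS Hn /=.
rewrite !big1 ?mul0r ?ler0z ?W_lb // => t _; exact: big1.
Qed.
End Proof.

Theorem lemma4p4 (R : realType) (d : nat) (A : VASSMDP d)
  (y : 'I_d -> int) (z : st A -> int) :
  (0 < d)%N -> wf_VASSMDP A -> strongly_connected A ->
  maximal_solution_II A y z ->
  exists k : R,
    forall (c : 'I_d), 0 < y c ->
    forall (eps : R), 0 < eps ->
    forall (p : st A) (sigma : st A -> seq (st A * vec d * st A) -> st A * vec d * st A -> R),
      is_strategy A sigma ->
      exists n0 : nat, forall n : nat, (n0 <= n)%N ->
        prob_C_ge_le A sigma p (nvec d n) c
          ((n%:R : R) `^ (1 + eps)) (k * (n%:R : R) `^ (- eps)).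
Proof.
move=> _ wfA _ [solII _].
have Hy : forall i, 0 <= y i by case: solII.
have Hz : forall q, 0 <= z q by case: solII.
set Sy := \sum_(i < d) y i.
set Zs := \sum_q z q.
set Ci := C d A y.
have HSy : 0 <= Sy by apply: sumr_ge0.
have HZs : 0 <= Zs by apply: sumr_ge0.
have HC : 0 <= Ci by apply: sumr_ge0 => i _; apply: mulr_ge0.
exists ((Sy + Zs + Ci)%:~R).
move=> c hy eps heps p sigma strat.
exists 1%N => n hn m.
set x := (n%:R : R) `^ (1 + eps).
have hy1 : 1 <= y c by [].
have Hmain := @main R d A y z sigma p wfA strat solII c x hy1 m [::] (fun i => nvec d n i).
have -> : prob_reach_within sigma p (nvec d n) c x m = f R d A sigma p c x m [::] (fun i => nvec d n i) by [].
set F := f _ _ _ _ _ _ _ _ _ _ in Hmain *.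
have HF : 0 <= F.
  by apply: sumr_ge0 => ts _; case: ifP => // _; apply: ppr_ge0.
have Hlow : forall i, - (K d A)%:Z <= nvec d n i by move=> i; rewrite ffunE; lia.
move: (Hmain Hlow) => {Hmain} Hmain.
have HW : Wv d A y z (fun i => nvec d n i) (last_state p [::]) + Ci <= n%:Z * (Sy + Zs + Ci).
  rewrite /Wv /last_state /=.
  have -> : \sum_(i < d) nvec d n i * y i = n%:Z * Sy.
    by rewrite /Sy big_distrr /=; apply: eq_bigr => i _; rewrite ffunE.
  have Hzp : z p <= Zs by rewrite /Zs (bigD1 p) //= lerDl; apply: sumr_ge0.
  have Hn1 : 1 <= n%:Z by [].
  nia.
have Npos : (1 : R) <= n%:R by rewrite ler1n.
set a := (n%:R : R) `^ eps.
have Ha : 0 < a by apply: powR_gt0; lra.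
have Hx : x = n%:R * a.
  have Hn0 : (n%:R : R) != 0 by rewrite pnatr_eq0 -lt0n.
  rewrite /x powRD; last by apply/implyP => _.
  by rewrite powRr1 //; lra.
rewrite powRN -/a.
have HW' : ((Wv d A y z (fun i => nvec d n i) (last_state p [::]) + Ci)%:~R : R) <= n%:R * (Sy + Zs + Ci)%:~R.
  by rewrite -mulrz_nat -intrM ler_int natz.
set k := ((Sy + Zs + Ci)%:~R : R) in HW' *.
have HCr : (0 : R) <= Ci%:~R by rewrite ler0z.
rewrite Hx in Hmain.
have H1 : F * a * n%:R <= n%:R * k by nra.
have H2 : F * a <= k by nra.
rewrite -(ler_pM2r Ha) -mulrA mulVf ?mulr1 //; exact: lt0r_neq0.
Qed.
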